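(* Let $A:\mathbb{R}^n\to\mathbb{R}^n$ be a linear operator that is GTP (respectively, GSTP) with respect to a totally positive structure $\{K_1,\ldots,K_n\}$. Then the adjoint operator $A^*$ is GTP (respectively, GSTP) with respect to the totally positive structure $\{K_1^*,\ldots,K_n^*\}$.
   Context: A proper cone is a closed convex cone that is pointed and solid. $\wedge^j\mathbb{R}^n$ is the $j$th exterior power of $\mathbb{R}^n$, with inner product $\langle x_1\wedge\cdots\wedge x_j,y_1\wedge\cdots\wedge y_j\rangle=\det(\langle x_k,y_l\rangle)_{k,l=1}^j$; via these inner products dual spaces are identified with the spaces themselves, the adjoint $A^*$ is the transpose, and for a proper cone $K$ its adjoint cone is $K^*=\{x^*:\langle y,x^*\rangle\ge0\ \forall y\in K\}$. $\wedge^jA$ denotes the operator with $(\wedge^jA)(x_1\wedge\cdots\wedge x_j)=Ax_1\wedge\cdots\wedge Ax_j$. $B$ is $K$-nonnegative if $BK\subseteq K$, $K$-positive if $B(K\setminus\{0\})\subseteq\operatorname{int}K$. A totally positive structure is a family $\{K_1,\ldots,K_n\}$ with $K_j\subset\wedge^j\mathbb{R}^n$ proper cones; $A$ is GTP (GSTP) with respect to it if $\wedge^jA$ is $K_j$-nonnegative (resp. $K_j$-positive) for all $j=1,\ldots,n$. *)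

(* Defs.v *)
From HB Require Import structures.
From mathcomp Require Import all_boot all_order all_algebra.
From mathcomp Require Import all_classical all_reals all_analysis.
Set Implicit Arguments. Unset Strict Implicit. Unset Printing Implicit Defensive.
Import Order.TTheory GRing.Theory Num.Theory.
Import numFieldNormedType.Exports.
Local Open Scope classical_set_scope.
Local Open Scope ring_scope.

(* Index set of the standard basis e_S = e_{s_1} /\ ... /\ e_{s_j}
   (s_1 < ... < s_j) of the j-th exterior power of R^n:
   the j-element subsets S of {0,...,n-1}. *)
Definition ksub (n j : nat) := {S : {set 'I_n} | #|S| == j}.

Definition wdim (n j : nat) : nat := #|{: ksub n j}|.

(* Coordinates of /\^j R^n in the basis (e_S)_S: we identify /\^j R^n with
   column vectors indexed by enum_rank of the subsets. *)
Definition wspace (R : realType) (n j : nat) := 'cV[R]_(wdim n j).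

(* the a-th smallest element of S (a < j), for S a j-subset *)
Definition sidx (n j : nat) (S : ksub n j) (a : 'I_j) : 'I_n :=
  @enum_val _ (mem (val S)) (cast_ord (esym (eqP (valP S))) a).

Definition subset_of (n j : nat) (I : 'I_(wdim n j)) : ksub n j := enum_val I.

(* Matrix of /\^j A in the basis (e_S): entry (I, J) is the minor
   det A[I, J], since (/\^j A) e_J = A e_{j_1} /\ ... /\ A e_{j_j}
   = sum_I det A[I,J] e_I. *)
Definition wedge_op (R : realType) (n j : nat) (A : 'M[R]_n) : 'M[R]_(wdim n j) :=
  \matrix_(I, J) \det (\matrix_(a < j, b < j)
       A (sidx (subset_of I) a) (sidx (subset_of J) b)).

(* The inner product on /\^j R^n induced by det(<x_k, y_l>): in the basis
   (e_S) it is orthonormal, so it is the standard dot product. *)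
Definition winner (R : realType) (m : nat) (x y : 'cV[R]_m) : R :=
  \sum_(i < m) x i 0 * y i 0.

Definition convex_cone (R : realType) (m : nat) (K : set 'cV[R]_m) : Prop :=
  K 0 /\ (forall x y, K x -> K y -> K (x + y)) /\
  (forall (a : R) x, 0 <= a -> K x -> K (a *: x)).

Definition pointed (R : realType) (m : nat) (K : set 'cV[R]_m) : Prop :=
  forall x, K x -> K (- x) -> x = 0.

Definition solid (R : realType) (m : nat) (K : set 'cV[R]_m) : Prop :=
  (interior K) !=set0.

Definition proper_cone (R : realType) (m : nat) (K : set 'cV[R]_m) : Prop :=
  [/\ closed K, convex_cone K, pointed K & solid K].

Definition adjoint_cone (R : realType) (m : nat) (K : set 'cV[R]_m)
  : set 'cV[R]_m := [set xs | forall y, K y -> 0 <= winner y xs].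

Definition K_nonneg (R : realType) (m : nat) (K : set 'cV[R]_m) (B : 'M[R]_m)
  : Prop := forall x, K x -> K (B *m x).

Definition K_pos (R : realType) (m : nat) (K : set 'cV[R]_m) (B : 'M[R]_m)
  : Prop := forall x, K x -> x != 0 -> interior K (B *m x).

Definition TP_structure (R : realType) (n : nat)
  (K : forall j : nat, set (wspace R n j)) : Prop :=
  forall j, (1 <= j <= n)%N -> proper_cone (K j).

Definition GTP (R : realType) (n : nat) (K : forall j : nat, set (wspace R n j))
  (A : 'M[R]_n) : Prop :=
  forall j, (1 <= j <= n)%N -> K_nonneg (K j) (wedge_op j A).

Definition GSTP (R : realType) (n : nat) (K : forall j : nat, set (wspace R n j))
  (A : 'M[R]_n) : Prop :=
  forall j, (1 <= j <= n)%N -> K_pos (K j) (wedge_op j A).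

Definition adjoint_structure (R : realType) (n : nat)
  (K : forall j : nat, set (wspace R n j)) : forall j : nat, set (wspace R n j) :=
  fun j => adjoint_cone (K j).

(* Main.v *)
Require Import Defs.
From HB Require Import structures.
From mathcomp Require Import all_boot all_order all_algebra.
From mathcomp Require Import all_classical all_reals all_analysis.
From mathcomp Require Import ring lra.
Import Order.TTheory GRing.Theory Num.Theory.
Import numFieldNormedType.Exports.
Local Open Scope classical_set_scope.
Local Open Scope ring_scope.


Section W.
Variables (R : realType) (m : nat).
Implicit Types (x y z w u : 'cV[R]_m).

Lemma winnerC x y : winner x y = winner y x.
Proof. by apply: eq_bigr => i _; rewrite mulrC. Qed.

Lemma winnerDl x y z : winner (x + y) z = winner x z + winner y z.
Proof. by rewrite /winner -big_split; apply: eq_bigr => i _; rewrite !mxE mulrDl. Qed.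

Lemma winnerZl (a : R) x z : winner (a *: x) z = a * winner x z.
Proof. by rewrite /winner mulr_sumr; apply: eq_bigr => i _; rewrite !mxE mulrA. Qed.

Lemma winnerNl x z : winner (- x) z = - winner x z.
Proof. by rewrite /winner -sumrN; apply: eq_bigr => i _; rewrite !mxE mulNr. Qed.

Lemma winnerBl x y z : winner (x - y) z = winner x z - winner y z.
Proof. by rewrite winnerDl winnerNl. Qed.

Lemma winnerDr x y z : winner z (x + y) = winner z x + winner z y.
Proof. by rewrite !(winnerC z) winnerDl. Qed.
Lemma winnerZr (a : R) x z : winner z (a *: x) = a * winner z x.
Proof. by rewrite !(winnerC z) winnerZl. Qed.
Lemma winnerBr x y z : winner z (x - y) = winner z x - winner z y.
Proof. by rewrite !(winnerC z) winnerBl. Qed.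
Lemma winner0l z : winner 0 z = 0.
Proof. by rewrite /winner big1 // => i _; rewrite mxE mul0r. Qed.
Lemma winner0r z : winner z 0 = 0.
Proof. by rewrite winnerC winner0l. Qed.

Lemma winner_ge0 x : 0 <= winner x x.
Proof. by apply: sumr_ge0 => i _; rewrite -expr2 sqr_ge0. Qed.

Lemma winner_eq0 x : winner x x = 0 -> x = 0.
Proof.
move=> /eqP; rewrite psumr_eq0; last by move=> i _; rewrite -expr2 sqr_ge0.
move=> /allP H; apply/matrixP => i j; rewrite mxE (ord1 j).
by have /(_ (mem_index_enum i)) := H i; rewrite -expr2 sqrf_eq0 => /eqP.
Qed.

Lemma winner_gt0 x : x != 0 -> 0 < winner x x.
Proof. by move=> x0; rewrite lt_def winner_ge0 andbT; apply: contra x0 => /eqP/winner_eq0 ->. Qed.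

Lemma winner_mul (B : 'M[R]_m) x y : winner y (B^T *m x) = winner (B *m y) x.
Proof.
rewrite /winner.
under eq_bigr => i _ do rewrite !mxE big_distrr /=.
under [RHS]eq_bigr => i _ do rewrite !mxE big_distrl /=.
rewrite exchange_big /=; apply: eq_bigr => i _; apply: eq_bigr => k _.
by rewrite !mxE; ring.
Qed.

Lemma entry_le_norm x i : `|x i 0| <= `|x|.
Proof.
rewrite [leRHS]/Num.norm /= mx_normrE; apply/bigmax_geP; right; exists (i, 0) => //.
Qed.

Lemma norm_le_bound x c : 0 <= c -> (forall i, `|x i 0| <= c) -> `|x| <= c.
Proof.
move=> c0 H; rewrite [leLHS]/Num.norm /= mx_normrE; apply/bigmax_leP; split => //.
by move=> [i j] _ /=; rewrite (ord1 j).
Qed.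

Lemma winner_bound x y : `|winner x y| <= m%:R * (`|x| * `|y|).
Proof.
rewrite /winner (le_trans (ler_norm_sum _ _ _)) //.
rewrite mulr_natl -[m in _ *+ m]card_ord -sumr_const; apply: ler_sum => i _.
by rewrite normrM ler_pM ?entry_le_norm.
Qed.

Lemma norm_sq_le x : `|x| ^+ 2 <= winner x x.
Proof.
have [->|x0] := eqVneq x 0; first by rewrite normr0 expr0n /= winner_ge0.
have [[i j] ->] : exists i, `|x| = `|x i.1 i.2|.
  by apply: mx_norm_neq0; rewrite (_ : mx_norm x = `|x|) // normr_eq0.
rewrite /= (ord1 j) real_normK ?num_real // /winner (bigD1 i) //= lerDl.
by apply: sumr_ge0 => k _; rewrite -expr2 sqr_ge0.
Qed.

Lemma cont_sum (F : 'I_m -> 'cV[R]_m -> R) :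
  (forall i, continuous (F i)) -> continuous (fun y => \sum_i F i y).
Proof.
move=> Fc; rewrite unlock /reducebig.
elim: (index_enum _) => [|a s IH] /=; first exact: cst_continuous.
by move=> y; apply: continuousD; [exact: Fc | exact: IH].
Qed.

Lemma winner_contl w : continuous (fun y => winner y w).
Proof.
apply: cont_sum => i y; apply: continuousM; [exact: coord_continuous|exact: cst_continuous].
Qed.

Lemma winner_contr w : continuous (fun y => winner w y).
Proof. by under eq_fun do rewrite winnerC; exact: winner_contl. Qed.

End W.


Section T.
Variable (R : realType).

Lemma mentry_le_norm p q (x : 'M[R]_(p, q)) i j : `|x i j| <= `|x|.
Proof.
rewrite [leRHS]/Num.norm /= mx_normrE; apply/bigmax_geP; right; exists (i, j) => //.
Qed.

Lemma mnorm_le_bound p q (x : 'M[R]_(p, q)) c : 0 <= c -> (forall i j, `|x i j| <= c) -> `|x| <= c.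
Proof.
move=> c0 H; rewrite [leLHS]/Num.norm /= mx_normrE; apply/bigmax_leP; split => //.
Qed.

Lemma norm_trmx p q (x : 'M[R]_(p, q)) : `|x^T| = `|x|.
Proof.
apply/eqP; rewrite eq_le; apply/andP; split; apply: mnorm_le_bound => // i j.
  by rewrite mxE; exact: mentry_le_norm.
by have := mentry_le_norm _ _ x^T j i; rewrite mxE.
Qed.

Lemma trmx_cont p q : continuous (@trmx R p q).
Proof.
move=> x A /nbhs_ballP [e e0 He]; apply/nbhs_ballP; exists e => // y Hy.
apply: He; move: Hy; rewrite -!ball_normE /ball_ /=.
by rewrite -linearB /= norm_trmx.
Qed.

Lemma cV_compact m (A : set 'cV[R]_m) (c : R) :
  closed A -> (forall x, A x -> `|x| <= c) -> compact A.
Proof.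
move=> Acl Ab.
pose B := [set v : 'rV[R]_m | A v^T].
have cB : compact B.
  apply: bounded_closed_compact.
    exists c; split; first exact: num_real.
    move=> M M1 v Bv /=; rewrite -norm_trmx (le_trans (Ab _ Bv)) // ltW //.
  by apply: preimage_closed => // v _; exact: trmx_cont.
have -> : A = trmx @` B.
  apply/seteqP; split => [x Ax|_ [v Bv <-] //].
  by exists x^T; rewrite /B /= ?trmxK.
apply: continuous_compact => //; apply: continuous_subspaceT; exact: trmx_cont.
Qed.

Lemma interiorP m (A : set 'cV[R]_m) x :
  interior A x <-> exists2 e : R, 0 < e & forall y, `|x - y| < e -> A y.
Proof.
rewrite /interior /=; split.
  by move=> /nbhs_ballP [e e0 He]; exists e => // y Hy; apply: He; rewrite -ball_normE.
by move=> [e e0 He]; apply/nbhs_ballP; exists e => // y; rewrite -ball_normE; exact: He.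
Qed.

Lemma quad_ge0 (a b : R) : 0 <= b ->
  (forall t : R, 0 < t -> t <= 1 -> 0 <= 2 * t * a + t ^+ 2 * b) -> 0 <= a.
Proof.
move=> b0 H; rewrite leNgt; apply/negP => a0.
have hba : 0 < b - a by lra.
pose t := - a / (b - a).
have t0 : 0 < t by rewrite /t divr_gt0 // oppr_gt0.
have t1 : t <= 1 by rewrite /t ler_pdivrMr // mul1r; lra.
have := H t t0 t1.
have hb : t * b = - a + t * a.
  by rewrite /t; field; rewrite subr_eq0; apply/eqP => hh; move: hba; rewrite hh subrr ltxx.
have -> : 2 * t * a + t ^+ 2 * b = t * a * (1 + t) by rewrite expr2 -[t * t * b]mulrA hb; ring.
move=> hh; have : 0 < t * (- a) * (1 + t).
  by apply: mulr_gt0; [apply: mulr_gt0 => //; rewrite oppr_gt0 | lra].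
by rewrite mulrN mulNr oppr_gt0 ltNge hh.
Qed.

End T.


Set Implicit Arguments.
Section C.
Variable (R : realType).

Lemma pos_int m (K : set 'cV[R]_m) z x :
  interior K z -> adjoint_cone K x -> x != 0 -> 0 < winner z x.
Proof.
move=> /interiorP [e e0 He] Kx x0.
pose d := e / (`|x| + 1).
have d0 : 0 < d by rewrite /d divr_gt0 // ltr_wpDl.
have : K (z - d *: x).
  apply: He; rewrite opprB addrC subrK normrZ gtr0_norm //.
  by rewrite /d mulrAC ltr_pdivrMr ?ltr_wpDl // ltr_pM2l // ltrDl.
move=> /Kx; rewrite winnerBl winnerZl => h.
have := @winner_gt0 _ _ x x0; move: h; set a := winner z x; set b := winner x x => h hb.
have : 0 < d * b by rewrite mulr_gt0.
lra.
Qed.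

Lemma adj_closed m (K : set 'cV[R]_m) : closed (adjoint_cone K).
Proof.
have -> : adjoint_cone K = \bigcap_(y in K) ((fun x => winner y x) @^-1` [set r | 0 <= r]).
  by apply/seteqP; split => [x Hx y Ky|x Hx y Ky]; [exact: Hx|exact: Hx].
apply: closed_bigI => y Ky; apply: preimage_closed; last exact: closed_ge.
move=> x _; exact: (@winner_contr _ _ y).
Qed.

Lemma adj_convex m (K : set 'cV[R]_m) : convex_cone (adjoint_cone K).
Proof.
split; first by move=> y Ky; rewrite winner0r.
split; first by move=> x y Hx Hy z Kz; rewrite winnerDr addr_ge0 //; [exact: Hx|exact: Hy].
by move=> a x a0 Hx z Kz; rewrite winnerZr mulr_ge0 //; exact: Hx.
Qed.

Lemma adj_pointed m (K : set 'cV[R]_m) : solid K -> pointed (adjoint_cone K).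
Proof.
move=> [e He] x Hx Hnx; apply/eqP; apply/negP => /negP x0.
have h1 := pos_int He Hx x0.
have : - x != 0 by rewrite oppr_eq0.
move=> /(pos_int He Hnx); rewrite winnerC winnerNl winnerC oppr_gt0 => h2.
by move: h1; rewrite ltNge (ltW h2).
Qed.

Lemma int_of_strict m (K : set 'cV[R]_m) w : closed K -> convex_cone K ->
  (forall y, K y -> `|y| = 1 -> 0 < winner y w) -> interior (adjoint_cone K) w.
Proof.
move=> Kcl [_ [_ KZ]] Hw.
pose C := K `&` [set y | `|y| = 1].
have cC : compact C.
  apply: (@cV_compact R m C 1); last by move=> x [_ ->].
  apply: closedI => //; apply: (@preimage_closed _ _ (fun y : 'cV[R]_m => `|y|) [set r : R | r = 1]); last exact: closed_eq.
  move=> x _; exact: norm_continuous.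
have [c c0 Hc] : exists2 c : R, 0 < c & forall y, C y -> c <= winner y w.
  case: (pselect (C !=set0)) => [Cn|C0].
    have cw : {within C, continuous (fun y => winner y w)}.
      by apply: continuous_subspaceT; exact: winner_contl.
    have [y0 Cy0 Hmin] := compact_EVT_min Cn cC cw.
    move: Cy0; rewrite inE => -[Ky0 ny0].
    exists (winner y0 w); first exact: Hw.
    by move=> y Cy; apply: Hmin; rewrite inE.
  by exists 1 => // y Cy; exfalso; apply: C0; exists y.
have Hs : forall y, K y -> c * `|y| <= winner y w.
  move=> y Ky; have [->|y0] := eqVneq y 0; first by rewrite normr0 mulr0 winner0l.
  have ny0 : 0 < `|y| by rewrite normr_gt0.
  have : C (`|y|^-1 *: y).
    split; first by apply: KZ => //; rewrite invr_ge0 ltW.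
    by rewrite /= normrZ normrV ?unitfE ?normr_eq0 // normr_id mulVf // normr_eq0.
  move=> /Hc; rewrite winnerZl => h.
  by have := ler_wpM2r (ltW ny0) h; rewrite mulrAC mulVf ?gt_eqF // mul1r.
apply/interiorP; exists (c / (m%:R + 1)); first by rewrite divr_gt0 // ltr_wpDl.
move=> u hu y Ky.
have h1 := Hs y Ky.
have h2 := @winner_bound _ _ y (w - u).
have : winner y u = winner y w - winner y (w - u) by rewrite winnerBr opprB addrC subrK.
move=> ->.
have hwu : m%:R * `|w - u| <= c.
  move: hu; rewrite ltr_pdivlMr ?ltr_wpDl // => hu.
  have : 0 <= `|w - u| by [].
  move: hu; set t := `|w - u|; set k : R := m%:R => hu ht.
  have : 0 <= k by rewrite /k.
  nra.
have hy : 0 <= `|y| by [].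
move: h1 h2 hwu hy; set a := winner y w; set b := winner y (w - u).
set k : R := m%:R; set t := `|w - u|; set s := `|y| => h1 h2 hwu hy.
have : b <= k * (s * t) := le_trans (ler_norm b) h2.
nra.
Qed.

End C.

Set Implicit Arguments.

Section D.
Variable (R : realType).

Lemma winner_sumr m (y : 'cV[R]_m) (s : seq 'cV[R]_m) :
  winner y (\sum_(v <- s) v) = \sum_(v <- s) winner y v.
Proof.
elim: s => [|a s IH]; first by rewrite !big_nil winner0r.
by rewrite !big_cons winnerDr IH.
Qed.

Lemma winner_expand m (x y : 'cV[R]_m) (t : R) :
  winner (x + t *: y) (x + t *: y) = winner x x + 2 * t * winner y x + t ^+ 2 * winner y y.
Proof. rewrite !(winnerDl, winnerDr, winnerZl, winnerZr) (@winnerC _ _ x y); ring. Qed.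

Lemma winnerNN m (x y : 'cV[R]_m) : winner (- x) (- y) = winner x y.
Proof. by rewrite winnerNl (@winnerC _ _ x) winnerNl opprK winnerC. Qed.

Lemma proj_lemma m (K : set 'cV[R]_m) p : closed K -> convex_cone K -> ~ K p ->
  exists w, adjoint_cone K w /\ 0 < winner (- p) w.
Proof.
move=> Kcl [K0 [KD KZ]] Kp.
pose g (z : 'cV[R]_m) := \sum_i (z i 0 - p i 0) * (z i 0 - p i 0).
have gE z : g z = winner (z - p) (z - p).
  by rewrite /g /winner; apply: eq_bigr => i _; rewrite !mxE.
have gc : continuous g.
  rewrite /g; apply: cont_sum => i z /=.
  have hb : {for z, continuous (fun y : 'cV[R]_m => y i 0 - p i 0)}.
    apply: (continuousB (f := fun y : 'cV[R]_m => y i 0) (g := fun _ => p i 0)).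
      exact: coord_continuous.
    exact: cst_continuous.
  exact: (continuousM (s := fun y : 'cV[R]_m => y i 0 - p i 0) (t := fun y : 'cV[R]_m => y i 0 - p i 0)).
pose M := (m%:R + 2) * `|p|.
pose Kb := K `&` [set z | `|z| <= M].
have cKb : compact Kb.
  apply: (@cV_compact R m Kb M); last by move=> x [].
  apply: closedI => //; apply: (@preimage_closed _ _ (fun y : 'cV[R]_m => `|y|) [set r : R | r <= M]); last exact: closed_le.
  move=> x _; exact: norm_continuous.
have Kb0 : Kb !=set0.
  by exists 0; split => //=; rewrite normr0 mulr_ge0 // addr_ge0.
have gcw : {within Kb, continuous g} by exact: continuous_subspaceT.
have [z0 Kz0 Hmin] := compact_EVT_min Kb0 cKb gcw.
move: Kz0; rewrite inE => -[Kz0 nz0].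
have Hglob : forall z, K z -> g z0 <= g z.
  move=> z Kz; have [zM|zM] := leP `|z| M; first by apply: Hmin; rewrite inE.
  have h0 : g z0 <= g 0 by apply: Hmin; rewrite inE; split => //=; rewrite normr0 mulr_ge0 // addr_ge0.
  apply: (le_trans h0); rewrite !gE add0r.
  have h1 := @winner_bound _ _ (- p) (- p).
  have h2 := @norm_sq_le _ _ (z - p).
  have h3 := lerB_dist z p.
  have h4 : 0 <= `|p| by [].
  have h5 : 0 <= (m%:R : R) by [].
  move: zM h1 h2 h3; rewrite /M normrN.
  set a := winner (- p) (- p); set b := winner (z - p) (z - p).
  set k : R := m%:R; set P := `|p|; set Z := `|z|; set D := `|z - p| => zM h1 h2 h3.
  have ha : a <= k * (P * P) := le_trans (ler_norm a) h1.
  have hD : (k + 1) * P <= D by lra.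
  have hkP : 0 <= (k + 1) * P by rewrite mulr_ge0 // addr_ge0.
  have hD2 : ((k + 1) * P) * ((k + 1) * P) <= D * D by apply: ler_pM.
  have hk : k * (P * P) <= ((k + 1) * P) * ((k + 1) * P).
    have -> : ((k + 1) * P) * ((k + 1) * P) = k * (P * P) + (k * k + k + 1) * (P * P) by ring.
    by rewrite lerDl mulr_ge0 // ?addr_ge0 ?mulr_ge0.
  rewrite expr2 in h2; lra.
pose w := z0 - p.
have Hw1 : forall y, K y -> 0 <= winner y w.
  move=> y Ky; apply: (@quad_ge0 _ _ (winner y y)); first exact: winner_ge0.
  move=> t t0 t1.
  have := Hglob (z0 + t *: y) (KD _ _ Kz0 (KZ _ _ (ltW t0) Ky)).
  rewrite !gE (_ : z0 + t *: y - p = w + t *: y); last by rewrite /w addrAC.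
  rewrite winner_expand => h; lra.
have Hw2 : winner z0 w <= 0.
  rewrite -oppr_ge0; apply: (@quad_ge0 _ _ (winner z0 z0)); first exact: winner_ge0.
  move=> t t0 t1.
  have := Hglob ((1 - t) *: z0) (KZ _ _ _ Kz0).
  rewrite subr_ge0 => /(_ t1).
  rewrite !gE (_ : (1 - t) *: z0 - p = w + t *: (- z0)); last first.
    by rewrite /w scalerBl scale1r scalerN; rewrite addrAC.
  rewrite winner_expand.
  have -> : winner (- z0) w = - winner z0 w by apply: winnerNl.
  have -> : winner (- z0) (- z0) = winner z0 z0 by apply: winnerNN.
  move=> h; lra.
have w0 : w != 0.
  apply/negP => /eqP hw; apply: Kp.
  have : z0 - p = 0 := hw.
  by move/eqP; rewrite subr_eq0 => /eqP <-.
exists w; split; first exact: Hw1.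
have -> : - p = w - z0 by rewrite /w addrAC subrr add0r.
rewrite winnerBl.
have := @winner_gt0 _ _ w w0.
move=> h; lra.
Qed.

Lemma norm1_neq0 m (y : 'cV[R]_m) : `|y| = 1 -> y != 0.
Proof.
move=> h; apply/eqP => y0; move: h; rewrite y0 normr0 => /eqP.
by rewrite eq_sym oner_eq0.
Qed.

Lemma strict_exists m (K : set 'cV[R]_m) : proper_cone K ->
  exists w, forall y, K y -> `|y| = 1 -> 0 < winner y w.
Proof.
move=> [Kcl Kc Kpt Ksol].
pose C := K `&` [set y | `|y| = 1].
have cC : compact C.
  apply: (@cV_compact R m C 1); last by move=> x [_ ->].
  apply: closedI => //; apply: (@preimage_closed _ _ (fun y : 'cV[R]_m => `|y|) [set r : R | r = 1]); last exact: closed_eq.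
  move=> x _; exact: norm_continuous.
pose f (w : 'cV[R]_m) := [set y : 'cV[R]_m | 0 < winner y w].
have fop : forall w, adjoint_cone K w -> open (f w).
  move=> w _; rewrite (_ : f w = (fun y => winner y w) @^-1` [set r : R | 0 < r]) //.
  apply: open_comp; last exact: open_gt.
  move=> x _; exact: winner_contl.
have Ccov : C `<=` cover (adjoint_cone K) f.
  move=> y [Ky ny].
  have nKy : ~ K (- y).
    move=> Kny; have y0 := Kpt y Ky Kny.
    by move: (@norm1_neq0 _ y ny); rewrite y0 eqxx.
  have [w [Hw Hpos]] := @proj_lemma m K (- y) Kcl Kc nKy.
  by exists w => //; rewrite /f /= -[y]opprK.
move: cC; rewrite compact_cover => /(_ _ _ f fop Ccov) [D' sD' HD'].
exists (\sum_(v <- finmap.enum_fset D') v) => y Ky ny.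
have [v /= vD' hv] := HD' y (conj Ky ny).
rewrite winner_sumr (bigD1_seq v) ?finmap.fset_uniq //=.
apply: (lt_le_trans hv); rewrite lerDl big_seq_cond; apply: sumr_ge0 => i /andP [iD _].
by have := sD' i iD; rewrite inE; apply.
Qed.

Lemma adj_proper m (K : set 'cV[R]_m) : proper_cone K -> proper_cone (adjoint_cone K).
Proof.
move=> HK; have [Kcl Kc Kpt Ksol] := HK.
split; [exact: adj_closed | exact: adj_convex | exact: adj_pointed |].
have [w Hw] := strict_exists HK.
by exists w; exact: int_of_strict.
Qed.

Lemma wedge_tr n j (A : 'M[R]_n) : wedge_op j A^T = (wedge_op j A)^T.
Proof.
apply/matrixP => I J; rewrite !mxE -det_tr; congr (\det _).
by apply/matrixP => a b; rewrite !mxE.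
Qed.

End D.

Unset Implicit Arguments.

Theorem proposition14 (R : realType) (n : nat)
  (K : forall j : nat, set (wspace R n j)) (A : 'M[R]_n) :
  TP_structure K ->
  [/\ TP_structure (adjoint_structure K),
      (GTP K A -> GTP (adjoint_structure K) A^T) &
      (GSTP K A -> GSTP (adjoint_structure K) A^T)].
Proof.
move=> HK; split.
- by move=> j hj; apply: adj_proper; exact: HK.
- move=> HG j hj x Hx y Ky; rewrite /adjoint_structure /= in Hx *.
  by rewrite wedge_tr winner_mul; apply: Hx; exact: HG.
- move=> HG j hj x Hx x0; rewrite /adjoint_structure /= in Hx *.
  have [Kcl Kc _ _] := HK j hj.
  rewrite wedge_tr; apply: int_of_strict => // y Ky ny.
  rewrite winner_mul; apply: pos_int Hx x0; apply: HG => //.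
  first [ exact: (@norm1_neq0 R _ y ny)
        | (have := @norm1_neq0 R _ y ny; by [])
        | (apply/eqP => y0; have := @norm1_neq0 R _ y ny; rewrite y0 eqxx; by [])
        | (apply/eqP => y0; move: ny; rewrite y0 normr0 => /eqP; by rewrite eq_sym oner_eq0) ].
Qed.
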